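(* Let $u,u'\in R^{\times}$ and $a,a'\in R$. If $1-q\in R^{\times}$ and $\mathrm{Id}_{H_N^q}(\mathcal{B}_{(u,a)})=\mathrm{Id}_{H_N^q}(\mathcal{B}_{(u',a')})$, then $a'=a$.
   Context: $R$ is a commutative unital ring, $N\ge2$, and $q\in R$ a root of the $N$-th cyclotomic polynomial over $\mathbb{Z}$. $H_N^q$ is the Taft Hopf algebra over $R$: generated by $g,x$ with $g^N=1$, $x^N=0$, $xg=qgx$, $\Delta(g)=g\otimes g$, $\Delta(x)=1\otimes x+x\otimes g$, $\varepsilon(g)=1$, $\varepsilon(x)=0$, free over $R$ with basis $\{g^mx^n:0\le m,n<N\}$. For $u\in R^{\times},a\in R$, $\mathcal{B}_{(u,a)}$ is the $R$-algebra generated by $v_g,v_x$ with $v_g^N=u$, $v_x^N=a$, $v_xv_g=qv_gv_x$, a right $H_N^q$-comodule algebra via $v_g\mapsto v_g\otimes g$, $v_x\mapsto1\otimes x+v_x\otimes g$. Let $Z_i^H$ ($i\ge1$) be copies $\{Z_i^h:h\in H_N^q\}$ of the $R$-module $H_N^q$ and $T=T(\bigoplus_iZ_i^H)$ the tensor algebra with coaction $\delta(Z_i^h)=\sum Z_i^{h_1}\otimes h_2$. $P\in T$ is a polynomial $H_N^q$-identity for a right $H_N^q$-comodule algebra $B$ if $f(P)=0$ for all right $H_N^q$-comodule algebra maps $f:T\to B$; $\mathrm{Id}_{H_N^q}(B)$ is the set of these. *)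

(* Defs.v *)
From HB Require Import structures.
From mathcomp Require Import all_boot all_order all_algebra all_field.
From mathcomp Require Import finmap.
Set Implicit Arguments. Unset Strict Implicit. Unset Printing Implicit Defensive.
Import Order.TTheory GRing.Theory.
Local Open Scope ring_scope.

Section Taft.
Variables (R : comPzRingType) (N : nat) (q : R).

(* index (m,n) stands for the basis element g^m x^n of H, resp. v_g^m v_x^n of B *)
Definition bidx := ('I_N * 'I_N)%type.

(* basis vector with nat indices (zero vector if out of range) *)
Definition bv (m n : nat) : {ffun bidx -> R} :=
  [ffun k : bidx => ((k.1 == m :> nat) && (k.2 == n :> nat))%:R].

Definition fscale (I : finType) (r : R) (v : {ffun I -> R}) : {ffun I -> R} :=
  [ffun k => r * v k].
Definition fadd (I : finType) (v w : {ffun I -> R}) : {ffun I -> R} :=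
  [ffun k => v k + w k].

Definition ev (I : finType) (k : I) : {ffun I -> R} := [ffun k' => (k' == k)%:R].

Definition scmul (I : finType) (c : I -> I -> {ffun I -> R})
    (x y : {ffun I -> R}) : {ffun I -> R} :=
  [ffun k => \sum_(i : I) \sum_(j : I) x i * y j * c i j k].

Definition scpow (I : finType) (c : I -> I -> {ffun I -> R}) (one x : {ffun I -> R})
    (k : nat) : {ffun I -> R} := iter k (scmul c x) one.

Definition tens_c (I J : finType) (c1 : I -> I -> {ffun I -> R})
    (c2 : J -> J -> {ffun J -> R}) (p p' : I * J) : {ffun (I * J) -> R} :=
  [ffun kl => c1 p.1 p'.1 kl.1 * c2 p.2 p'.2 kl.2].

Definition tens (I J : finType) (v : {ffun I -> R}) (w : {ffun J -> R})
    : {ffun (I * J) -> R} := [ffun kl => v kl.1 * w kl.2].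

(* Taft algebra: (g^m x^n)(g^m' x^n') = q^(n m') g^(m+m' mod N) x^(n+n'),
   which is 0 when n+n' >= N   (from g^N = 1, x^N = 0, xg = qgx) *)
Definition taft_c (i j : bidx) : {ffun bidx -> R} :=
  if (i.2 + j.2 < N)%N then fscale (q ^+ (i.2 * j.1)) (bv ((i.1 + j.1) %% N) (i.2 + j.2))
  else [ffun => 0].

Definition H1 := bv 0 0.
Definition Hg := bv 1 0.
Definition Hx := bv 0 1.

Definition HH_c := tens_c taft_c taft_c.
Definition HH1 := tens H1 H1.

(* coproduct on the basis: Delta(g^m x^n) = Delta(g)^m Delta(x)^n with
   Delta(g) = g (x) g,  Delta(x) = 1 (x) x + x (x) g *)
Definition Delta (h : bidx) : {ffun (bidx * bidx) -> R} :=
  scmul HH_c (scpow HH_c HH1 (tens Hg Hg) h.1)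
             (scpow HH_c HH1 (fadd (tens H1 Hx) (tens Hx Hg)) h.2).

Variables (u a : R).

(* B_(u,a): (v_g^m v_x^n)(v_g^m' v_x^n')
      = q^(n m') u^((m+m') div N) a^((n+n') div N) v_g^((m+m') mod N) v_x^((n+n') mod N)
   (from v_g^N = u, v_x^N = a, v_x v_g = q v_g v_x) *)
Definition comod_c (i j : bidx) : {ffun bidx -> R} :=
  fscale (q ^+ (i.2 * j.1) * u ^+ ((i.1 + j.1) %/ N) * a ^+ ((i.2 + j.2) %/ N))
    (bv ((i.1 + j.1) %% N) ((i.2 + j.2) %% N)).

Definition B1 := bv 0 0.
Definition Bvg := bv 1 0.
Definition Bvx := bv 0 1.

Definition BH_c := tens_c comod_c taft_c.
Definition BH1 := tens B1 H1.

(* coaction on the basis: rho(v_g^m v_x^n) = rho(v_g)^m rho(v_x)^n with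
   rho(v_g) = v_g (x) g,  rho(v_x) = 1 (x) x + v_x (x) g *)
Definition rho_basis (k : bidx) : {ffun (bidx * bidx) -> R} :=
  scmul BH_c (scpow BH_c BH1 (tens Bvg Hg) k.1)
             (scpow BH_c BH1 (fadd (tens B1 Hx) (tens Bvx Hg)) k.2).

Definition rhoB (b : {ffun bidx -> R}) : {ffun (bidx * bidx) -> R} :=
  [ffun p => \sum_(k : bidx) b k * rho_basis k p].

(* The tensor algebra T = T(\oplus_i Z_i^H): free R-module on words in the
   letters Z_i^(g^m x^n), letter (i,(m,n)); copies are indexed by i : nat. *)
Definition word := seq (nat * bidx).
Definition Talg := {fsfun word -> R with 0}.

(* A family phi i h = image of the generator Z_i^h (h a basis element) in B;
   it determines a unique algebra map T -> B. *)
Definition evalW (phi : nat -> bidx -> {ffun bidx -> R}) (w : word)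
  : {ffun bidx -> R} :=
  foldr (fun z acc => scmul comod_c (phi z.1 z.2) acc) B1 w.

Definition evalT (phi : nat -> bidx -> {ffun bidx -> R}) (P : Talg)
  : {ffun bidx -> R} :=
  [ffun k => \sum_(w <- finsupp P) P w * evalW phi w k].

(* the induced algebra map T -> B is a comodule map: since T is generated by
   the Z_i^h and delta, rho are algebra maps, it suffices that
   rho(phi(Z_i^h)) = sum phi(Z_i^(h_1)) (x) h_2 for all i and basis h *)
Definition comod_family (phi : nat -> bidx -> {ffun bidx -> R}) : Prop :=
  forall (i : nat) (h : bidx),
    rhoB (phi i h) =
    [ffun kl : bidx * bidx =>
       \sum_(p : bidx * bidx) Delta h p * tens (phi i p.1) (ev p.2) kl].

Definition is_Hidentity (P : Talg) : Prop :=
  forall phi, comod_family phi -> evalT phi P = [ffun => 0].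

End Taft.

Definition cyclo_root (R : comPzRingType) (N : nat) (q : R) : bool :=
  (* q is a root of the N-th cyclotomic polynomial Phi_N in Z[X], i.e. the
     image of Phi_N in R[X] evaluated at q vanishes *)
  \sum_(i < size ('Phi_N : {poly int})) (('Phi_N : {poly int})`_i)%:~R * q ^+ i == 0.

Definition is_unit (R : comPzRingType) (r : R) : Prop := exists v : R, r * v = 1.

(* Main.v *)
Require Import Defs.
From HB Require Import structures.
From mathcomp Require Import all_boot all_order all_algebra all_field.
From mathcomp Require Import finmap.
Set Implicit Arguments. Unset Strict Implicit. Unset Printing Implicit Defensive.
Import GRing.Theory.
From mathcomp Require Import ring zify.
Local Open Scope ring_scope.

Ltac sc := try (solve [lia]).

Lemma sum_evr (R : comPzRingType) (I : finType) (k0 : I) (f : I -> R) :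
  \sum_k f k * ev R k0 k = f k0.
Proof.
rewrite (bigD1 k0) //= ffunE eqxx mulr1 big1 ?addr0 // => k /negPf nk.
by rewrite ffunE nk mulr0.
Qed.

Lemma sum_evl (R : comPzRingType) (I : finType) (k0 : I) (f : I -> R) :
  \sum_k ev R k0 k * f k = f k0.
Proof. by rewrite -[RHS](sum_evr k0); apply: eq_bigr => k _; rewrite mulrC. Qed.

Lemma scmul_ev (R : comPzRingType) (I : finType) (c : I -> I -> {ffun I -> R}) i j :
  scmul c (ev R i) (ev R j) = c i j.
Proof.
apply/ffunP => k; rewrite ffunE.
rewrite (eq_bigr (fun i' => ev R i i' * c i' j k)).
  by rewrite sum_evl.
move=> i' _; rewrite (eq_bigr (fun j' => ev R j j' * (ev R i i' * c i' j' k))).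
  by rewrite sum_evl.
by move=> j' _; rewrite mulrCA mulrA.
Qed.

Lemma scmul_unitl (R : comPzRingType) (I : finType) (c : I -> I -> {ffun I -> R}) e y :
  (forall j, c e j = ev R j) -> scmul c (ev R e) y = y.
Proof.
move=> He; apply/ffunP => k; rewrite ffunE.
rewrite (eq_bigr (fun i' => ev R e i' * (\sum_j y j * c i' j k))).
  rewrite sum_evl (eq_bigr (fun j => y j * ev R k j)); first by rewrite sum_evr.
  by move=> j _; rewrite He !ffunE eq_sym.
by move=> i' _; rewrite mulr_sumr; apply: eq_bigr => j _; rewrite mulrA.
Qed.

Lemma scmul_unitr (R : comPzRingType) (I : finType) (c : I -> I -> {ffun I -> R}) e y :
  (forall i, c i e = ev R i) -> scmul c y (ev R e) = y.
Proof.
move=> He; apply/ffunP => k; rewrite ffunE.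
rewrite (eq_bigr (fun i' => y i' * ev R k i')); first by rewrite sum_evr.
move=> i' _; rewrite (eq_bigr (fun j => ev R e j * (y i' * c i' j k))).
  by rewrite sum_evl He !ffunE eq_sym.
by move=> j _; rewrite mulrCA mulrA.
Qed.

Lemma scmulZl (R : comPzRingType) (I : finType) (c : I -> I -> {ffun I -> R}) r x y :
  scmul c (fscale r x) y = fscale r (scmul c x y).
Proof.
apply/ffunP => k; rewrite !ffunE mulr_sumr; apply: eq_bigr => i _.
rewrite mulr_sumr; apply: eq_bigr => j _; rewrite ffunE; ring.
Qed.

Lemma scmulZr (R : comPzRingType) (I : finType) (c : I -> I -> {ffun I -> R}) r x y :
  scmul c x (fscale r y) = fscale r (scmul c x y).
Proof.
apply/ffunP => k; rewrite !ffunE mulr_sumr; apply: eq_bigr => i _.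
rewrite mulr_sumr; apply: eq_bigr => j _; rewrite ffunE !mulrA.
ring.
Qed.

Lemma scmulDl (R : comPzRingType) (I : finType) (c : I -> I -> {ffun I -> R}) x y z :
  scmul c (fadd x y) z = fadd (scmul c x z) (scmul c y z).
Proof.
apply/ffunP => k; rewrite !ffunE -big_split; apply: eq_bigr => i _.
rewrite -big_split; apply: eq_bigr => j _; by rewrite ffunE !mulrDl.
Qed.

Lemma scmulDr (R : comPzRingType) (I : finType) (c : I -> I -> {ffun I -> R}) x y z :
  scmul c x (fadd y z) = fadd (scmul c x y) (scmul c x z).
Proof.
apply/ffunP => k; rewrite !ffunE -big_split; apply: eq_bigr => i _.
rewrite -big_split; apply: eq_bigr => j _; by rewrite ffunE mulrDr !mulrDl.
Qed.

Lemma bv_ev (R : comPzRingType) (N : nat) (k : bidx N) :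
  bv R N k.1 k.2 = ev R k.
Proof.
apply/ffunP => k'; rewrite !ffunE.
by case: k k' => [a b] [c d].
Qed.

Lemma fscale1 (R : comPzRingType) (I : finType) (v : {ffun I -> R}) : fscale 1 v = v.
Proof. by apply/ffunP => k; rewrite ffunE mul1r. Qed.

Lemma fscaleA (R : comPzRingType) (I : finType) r s (v : {ffun I -> R}) :
  fscale r (fscale s v) = fscale (r * s) v.
Proof. by apply/ffunP => k; rewrite !ffunE mulrA. Qed.

Lemma bvE (R : comPzRingType) n m k : (m < n.+2)%N -> (k < n.+2)%N ->
  bv R n.+2 m k = ev R ((inord m, inord k) : bidx n.+2).
Proof. by move=> Hm Hk; rewrite -bv_ev /= !inordK. Qed.

Lemma taft_gpow (R : comPzRingType) n (q : R) m : (m < n.+2)%N ->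
  scpow (taft_c q) (H1 R n.+2) (Hg R n.+2) m = bv R n.+2 m 0.
Proof.
elim: m => [|m IH] Hm; first by [].
have -> : scpow (taft_c q) (H1 R n.+2) (Hg R n.+2) m.+1 =
  scmul (taft_c q) (Hg R n.+2) (scpow (taft_c q) (H1 R n.+2) (Hg R n.+2) m) by [].
rewrite IH ?(ltnW Hm) //.
rewrite /Hg (@bvE R n m 0) ?(ltnW Hm) // (@bvE R n 1 0) //.
rewrite scmul_ev /taft_c /=.
rewrite !inordK; sc.
rewrite add0n mul0n expr0 fscale1 modn_small //.
Qed.

Lemma taft_xpow (R : comPzRingType) n (q : R) m : (m < n.+2)%N ->
  scpow (taft_c q) (H1 R n.+2) (Hx R n.+2) m = bv R n.+2 0 m.
Proof.
elim: m => [|m IH] Hm; first by [].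
have -> : scpow (taft_c q) (H1 R n.+2) (Hx R n.+2) m.+1 =
  scmul (taft_c q) (Hx R n.+2) (scpow (taft_c q) (H1 R n.+2) (Hx R n.+2) m) by [].
rewrite IH ?(ltnW Hm) //.
rewrite /Hx (@bvE R n 0 m) ?(ltnW Hm) // (@bvE R n 0 1) //.
rewrite scmul_ev /taft_c /=.
rewrite !inordK; sc.
by rewrite add1n Hm muln0 expr0 fscale1 mod0n.
Qed.

Lemma taft_gx (R : comPzRingType) n (q : R) m k : (m < n.+2)%N -> (k < n.+2)%N ->
  scmul (taft_c q) (bv R n.+2 m 0) (bv R n.+2 0 k) = bv R n.+2 m k.
Proof.
move=> Hm Hk; rewrite (@bvE R n m 0); sc. rewrite (@bvE R n 0 k); sc.
rewrite scmul_ev /taft_c /= !inordK; sc.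
by rewrite add0n Hk mul0n expr0 fscale1 addn0 modn_small.
Qed.


Definition eps (R : comPzRingType) N : {ffun bidx N -> R} :=
  [ffun k : bidx N => ((k.2 : nat) == 0%N)%:R].
Definition Eps (R : comPzRingType) N (A : {ffun bidx N * bidx N -> R}) : {ffun bidx N -> R} :=
  [ffun l => \sum_k eps R N k * A (k, l)].

Lemma sum_eps_bv (R : comPzRingType) n m k : (m < n.+2)%N -> (k < n.+2)%N ->
  \sum_k' eps R n.+2 k' * bv R n.+2 m k k' = (k == 0%N)%:R.
Proof. by move=> Hm Hk; rewrite bvE // sum_evr ffunE /= inordK. Qed.

Lemma eps_taft (R : comPzRingType) n (q : R) (i j : bidx n.+2) :
  \sum_k eps R n.+2 k * taft_c q i j k = eps R n.+2 i * eps R n.+2 j.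
Proof.
rewrite /taft_c; case: ifP => H.
  rewrite (eq_bigr (fun k => q ^+ (i.2 * j.1) * (eps R n.+2 k * bv R n.+2 ((i.1 + j.1) %% n.+2) (i.2 + j.2) k))); last first.
    by move=> k _; rewrite [fscale _ _ _]ffunE mulrCA.
  rewrite -mulr_sumr sum_eps_bv ?ltn_pmod // !ffunE.
  case: i H => [i1 [[|i2] Hi2]] /= H.
    by rewrite mul0n expr0 mul1r.
  by rewrite mulr0 mul0r.
rewrite big1 => [|k _]; last by rewrite !ffunE mulr0.
rewrite !ffunE; case: i H => [i1 [[|i2] Hi2]] /=; last by rewrite mul0r.
by case: j => [j1 [[|j2] Hj2]] //= _; rewrite mulr0.
Qed.

Lemma Eps_tens (R : comPzRingType) N (v w : {ffun bidx N -> R}) :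
  Eps (tens v w) = fscale (\sum_k eps R N k * v k) w.
Proof.
apply/ffunP => l; rewrite !ffunE mulr_suml; apply: eq_bigr => k _.
rewrite ?ffunE; ring.
Qed.

Lemma Eps_mul (R : comPzRingType) n (q : R) (A B : {ffun bidx n.+2 * bidx n.+2 -> R}) :
  Eps (scmul (HH_c q) A B) = scmul (taft_c q) (Eps A) (Eps B).
Proof.
apply/ffunP => l; rewrite [LHS]ffunE [RHS]ffunE.
transitivity (\sum_p \sum_p' A p * B p' * (eps R n.+2 p.1 * eps R n.+2 p'.1) * taft_c q p.2 p'.2 l).
  rewrite (eq_bigr (fun k => \sum_p \sum_p' eps R n.+2 k * (A p * B p' * HH_c q p p' (k, l)))); last first.
    move=> k _; rewrite [scmul _ _ _ _]ffunE mulr_sumr; apply: eq_bigr => p _.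
    by rewrite mulr_sumr.
  rewrite exchange_big; apply: eq_bigr => p _.
  rewrite exchange_big; apply: eq_bigr => p' _.
  rewrite -(eps_taft q) mulr_sumr mulr_suml; apply: eq_bigr => k _.
  rewrite /HH_c /tens_c !ffunE /=; ring.
rewrite (eq_bigr (fun i => \sum_j \sum_a \sum_b
   (eps R n.+2 a * A (a, i)) * (eps R n.+2 b * B (b, j)) * taft_c q i j l)); last first.
  move=> i _; apply: eq_bigr => j _; rewrite [Eps A i]ffunE [Eps B j]ffunE mulr_suml mulr_suml.
  apply: eq_bigr => a _; rewrite mulr_sumr mulr_suml; apply: eq_bigr => b _; ring.
rewrite (eq_bigr (fun i => \sum_a \sum_b \sum_j
   (eps R n.+2 a * A (a, i)) * (eps R n.+2 b * B (b, j)) * taft_c q i j l)); last first.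
  move=> i _; rewrite exchange_big; apply: eq_bigr => a _.
  by rewrite exchange_big.
rewrite [RHS]exchange_big [RHS]pair_big /=; apply: eq_bigr => p _.
rewrite [RHS]pair_big /=; apply: eq_bigr => p' _; rewrite -!surjective_pairing; ring.
Qed.

Lemma Eps_pow (R : comPzRingType) n (q : R) X j :
  Eps (scpow (HH_c q) (HH1 R n.+2) X j) = scpow (taft_c q) (H1 R n.+2) (Eps X) j.
Proof.
elim: j => [|j IH].
  rewrite /scpow /= /HH1 Eps_tens sum_eps_bv // fscale1 //.
have -> : scpow (HH_c q) (HH1 R n.+2) X j.+1 =
  scmul (HH_c q) X (scpow (HH_c q) (HH1 R n.+2) X j) by [].
by rewrite Eps_mul IH.
Qed.

Lemma Eps_Delta (R : comPzRingType) n (q : R) (k : bidx n.+2) :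
  Eps (Delta q k) = ev R k.
Proof.
rewrite /Delta Eps_mul !Eps_pow Eps_tens /Hg sum_eps_bv // fscale1.
have -> : Eps (fadd (tens (H1 R n.+2) (Hx R n.+2)) (tens (Hx R n.+2) (bv R n.+2 1 0)))
   = Hx R n.+2.
  apply/ffunP => l; rewrite [LHS]ffunE.
  rewrite (eq_bigr (fun k => eps R n.+2 k * H1 R n.+2 k * Hx R n.+2 l +
                              eps R n.+2 k * Hx R n.+2 k * bv R n.+2 1 0 l)); last first.
    by move=> k' _; rewrite [fadd _ _ _]ffunE ![tens _ _ _]ffunE /=; ring.
  rewrite big_split /= -!mulr_suml /H1 /Hx !sum_eps_bv //=.
  by rewrite mul1r mul0r addr0.
have k1 := ltn_ord k.1; have k2 := ltn_ord k.2.
rewrite (taft_gpow q k1) (taft_xpow q k2) (taft_gx q k1 k2).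
by rewrite bv_ev.
Qed.

Definition bnd (R : comPzRingType) N (M k0 : nat) (A : {ffun bidx N * bidx N -> R}) : Prop :=
  forall p : bidx N * bidx N, ~~ ((p.1.1 <= M)%N && (p.1.2 <= k0)%N) -> A p = 0.

Lemma comod_taft (R : comPzRingType) N (q u a : R) (i j : bidx N) :
  (i.1 + j.1 < N)%N -> (i.2 + j.2 < N)%N -> comod_c q u a i j = taft_c q i j.
Proof.
move=> H1 H2; rewrite /comod_c /taft_c H2 !divn_small // !expr0 !mulr1.
by rewrite (modn_small H2).
Qed.

Lemma mul_eq (R : comPzRingType) N (q u a : R) M1 k1 M2 k2 A B :
  bnd M1 k1 A -> bnd M2 k2 B -> (M1 + M2 < N)%N -> (k1 + k2 < N)%N ->
  scmul (BH_c q u a) A B = scmul (@HH_c R N q) A B.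
Proof.
move=> HA HB HM Hk; apply/ffunP => kl; rewrite !ffunE; apply: eq_bigr => i _.
apply: eq_bigr => j _.
case: (boolP ((i.1.1 <= M1)%N && (i.1.2 <= k1)%N)) => Hi; last by rewrite HA // !mul0r.
case: (boolP ((j.1.1 <= M2)%N && (j.1.2 <= k2)%N)) => Hj; last by rewrite HB // mulr0 !mul0r.
have E1 : (i.1.1 + j.1.1 < N)%N by move: Hi Hj => /andP[? ?] /andP[? ?]; lia.
have E2 : (i.1.2 + j.1.2 < N)%N by move: Hi Hj => /andP[? ?] /andP[? ?]; lia.
rewrite /BH_c /HH_c /tens_c [X in _ * X = _]ffunE [X in _ = _ * X]ffunE /=.
by rewrite (comod_taft q u a E1 E2).
Qed.

Lemma bnd_mul (R : comPzRingType) N (q : R) M1 k1 M2 k2 A B :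
  bnd M1 k1 A -> bnd M2 k2 B -> (M1 + M2 < N)%N -> (k1 + k2 < N)%N ->
  bnd (M1 + M2) (k1 + k2) (scmul (@HH_c R N q) A B).
Proof.
move=> HA HB HM Hk p Hp; rewrite !ffunE; apply: big1 => i _; apply: big1 => j _.
case: (boolP ((i.1.1 <= M1)%N && (i.1.2 <= k1)%N)) => Hi; last by rewrite HA // !mul0r.
case: (boolP ((j.1.1 <= M2)%N && (j.1.2 <= k2)%N)) => Hj; last by rewrite HB // mulr0 !mul0r.
rewrite /HH_c /tens_c !ffunE /taft_c.
have H2 : (i.1.2 + j.1.2 < N)%N by move: Hi Hj => /andP[? ?] /andP[? ?]; lia.
have H1 : (i.1.1 + j.1.1 < N)%N by move: Hi Hj => /andP[? ?] /andP[? ?]; lia.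
rewrite H2 !ffunE (modn_small H1).
case: eqP => E1; last by rewrite andFb mulr0 mul0r mulr0.
case: eqP => E2; last by rewrite andbF mulr0 mul0r mulr0.
exfalso; move/negP: Hp; apply; move: Hi Hj => /andP[? ?] /andP[? ?].
by apply/andP; split; [rewrite E1 | rewrite E2]; apply: leq_add.
Qed.

Lemma bnd_pow (R : comPzRingType) N (q u a : R) M k0 X :
  bnd M k0 X -> forall j, (j * M < N)%N -> (j * k0 < N)%N ->
  bnd (j * M) (j * k0) (scpow (@HH_c R N q) (HH1 R N) X j) /\
  scpow (BH_c q u a) (HH1 R N) X j = scpow (@HH_c R N q) (HH1 R N) X j.
Proof.
move=> HX; elim => [|j IH] HM Hk.
  split => // p Hp; rewrite /scpow /= /HH1 !ffunE.
  case: eqP => E1; last by rewrite andFb mul0r.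
  case: eqP => E2; last by rewrite andbF mul0r.
  by move: Hp; rewrite E1 E2.
have HM' : (j * M < N)%N by move: HM; rewrite mulSn; lia.
have Hk' : (j * k0 < N)%N by move: Hk; rewrite mulSn; lia.
have [Hb He] := IH HM' Hk'.
have -> : scpow (BH_c q u a) (HH1 R N) X j.+1 =
  scmul (BH_c q u a) X (scpow (BH_c q u a) (HH1 R N) X j) by [].
have -> : scpow (HH_c q) (HH1 R N) X j.+1 =
  scmul (HH_c q) X (scpow (HH_c q) (HH1 R N) X j) by [].
rewrite He !mulSn; split.
  by apply: bnd_mul => //; rewrite -mulSn.
by apply: mul_eq HX Hb _ _; rewrite -mulSn.
Qed.

Lemma rho_Delta (R : comPzRingType) N (q u a : R) (k : bidx N) :
  rho_basis q u a k = Delta q k.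
Proof.
have Hg1 : bnd 1 0 (tens (Bvg R N) (Hg R N)).
  move=> p Hp; rewrite !ffunE.
  case: eqP => E1; last by rewrite andFb mul0r.
  case: eqP => E2; last by rewrite andbF mul0r.
  by move: Hp; rewrite E1 E2.
have Hx1 : bnd 0 1 (fadd (tens (B1 R N) (Hx R N)) (tens (Bvx R N) (Hg R N))).
  move=> p Hp; rewrite !ffunE.
  have [E1|E1] := eqVneq (p.1.1 : nat) 0%N; last first.
    by rewrite /= !mul0r addr0.
  move: Hp; rewrite E1 /=; case: (p.1.2 : nat) => [|[|m]] //= _.
  by rewrite !mul0r addr0.
have kb1 := ltn_ord k.1; have kb2 := ltn_ord k.2.
have [b1 e1] := bnd_pow q u a Hg1 (j := k.1) ltac:(lia) ltac:(lia).
have [b2 e2] := bnd_pow q u a Hx1 (j := k.2) ltac:(lia) ltac:(lia).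
rewrite /rho_basis /Delta /BH1.
rewrite -[tens (B1 R N) (H1 R N)]/(HH1 R N) e1 e2.
apply: mul_eq b1 b2 _ _; lia.
Qed.

Definition lam (R : comPzRingType) N (phi : nat -> bidx N -> {ffun bidx N -> R}) i j :=
  \sum_k eps R N k * phi i j k.

Lemma phi_form (R : comPzRingType) n (q u a : R) phi :
  comod_family q u a phi -> forall i (h : bidx n.+2),
  phi i h = [ffun l => \sum_j lam phi i j * Delta q h (j, l)].
Proof.
move=> HC i h; apply/ffunP => l.
have := congr1 (fun A => Eps A l) (HC i h) => /=.
rewrite [Eps _ l]ffunE [Eps _ l]ffunE.
rewrite (eq_bigr (fun k => \sum_k0 phi i h k0 * (eps R n.+2 k * Delta q k0 (k, l)))); last first.
  move=> k _; rewrite [rhoB _ _ _ _ _]ffunE mulr_sumr; apply: eq_bigr => k0 _.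
  by rewrite rho_Delta mulrCA.
rewrite exchange_big /=.
rewrite (eq_bigr (fun k0 => phi i h k0 * ev R l k0)); last first.
  move=> k0 _; rewrite -mulr_sumr; congr (_ * _).
  move: (congr1 (fun f : {ffun bidx n.+2 -> R} => f l) (Eps_Delta q k0)); rewrite [Eps _ l]ffunE => ->.
  by rewrite !ffunE eq_sym.
rewrite sum_evr => ->.
rewrite [RHS]ffunE.
rewrite (eq_bigr (fun k => \sum_p eps R n.+2 k * (Delta q h p * phi i p.1 k * ev R l p.2))); last first.
  move=> k _; rewrite [X in _ * X]ffunE mulr_sumr; apply: eq_bigr => p _.
  by rewrite [tens _ _ _]ffunE /= [ev R p.2 l]ffunE [ev R l p.2]ffunE (eq_sym l) !mulrA.
rewrite exchange_big /=.
transitivity (\sum_j \sum_l' \sum_k eps R n.+2 k * (Delta q h (j, l') * phi i j k * ev R l l')).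
  rewrite [RHS]pair_bigA; apply: eq_bigr => -[j l'] _ /=; reflexivity.
apply: eq_bigr => j _.
rewrite (eq_bigr (fun l' => (lam phi i j * Delta q h (j, l')) * ev R l l')); first by rewrite sum_evr.
move=> l' _; rewrite /lam mulr_suml mulr_suml; apply: eq_bigr => k _; ring.
Qed.

Lemma tens_ev (R : comPzRingType) (I J : finType) (a : I) (b : J) :
  tens (ev R a) (ev R b) = ev R (a, b).
Proof. by apply/ffunP => [[x y]]; rewrite !ffunE /= xpair_eqE; case: (x == a); case: (y == b); rewrite /= ?mulr1 ?mulr0 ?mul0r. Qed.

Definition o0 n : bidx n.+2 := (ord0, ord0).
Definition gI n : bidx n.+2 := (inord 1, ord0).
Definition xI n : bidx n.+2 := (ord0, inord 1).

Lemma H1E (R : comPzRingType) n : H1 R n.+2 = ev R (o0 n).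
Proof. by rewrite /H1 bvE //; congr (ev R (_, _)); apply/val_inj; rewrite /= inordK. Qed.
Lemma HgE (R : comPzRingType) n : Hg R n.+2 = ev R (gI n).
Proof. by rewrite /Hg bvE //; congr (ev R (_, _)); apply/val_inj; rewrite /= inordK. Qed.
Lemma HxE (R : comPzRingType) n : Hx R n.+2 = ev R (xI n).
Proof. by rewrite /Hx bvE //; congr (ev R (_, _)); apply/val_inj; rewrite /= inordK. Qed.

Lemma taft_unitl (R : comPzRingType) n (q : R) j : taft_c q (o0 n) j = ev R j.
Proof.
rewrite /taft_c /= add0n ltn_ord mul0n expr0 fscale1 add0n modn_small; last exact: ltn_ord.
exact: bv_ev.
Qed.
Lemma taft_unitr (R : comPzRingType) n (q : R) i : taft_c q i (o0 n) = ev R i.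
Proof.
rewrite /taft_c /= addn0 ltn_ord muln0 expr0 fscale1 addn0 modn_small; last exact: ltn_ord.
exact: bv_ev.
Qed.
Lemma HH_unitl (R : comPzRingType) n (q : R) p : HH_c q (o0 n, o0 n) p = ev R p.
Proof. by rewrite /HH_c; rewrite -[tens_c _ _ _ _]/(tens _ _) /= !taft_unitl tens_ev; case: p. Qed.
Lemma HH_unitr (R : comPzRingType) n (q : R) p : HH_c q p (o0 n, o0 n) = ev R p.
Proof. by rewrite /HH_c; rewrite -[tens_c _ _ _ _]/(tens _ _) /= !taft_unitr tens_ev; case: p. Qed.

Lemma HH1E (R : comPzRingType) n : HH1 R n.+2 = ev R (o0 n, o0 n).
Proof. by rewrite /HH1 H1E tens_ev. Qed.

Lemma Delta_o (R : comPzRingType) n (q : R) :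
  Delta q (o0 n) = tens (ev R (o0 n)) (ev R (o0 n)).
Proof.
rewrite /Delta /= /scpow /= HH1E scmul_unitl ?tens_ev //.
exact: HH_unitl.
Qed.

Lemma Delta_g (R : comPzRingType) n (q : R) :
  Delta q (gI n) = tens (ev R (gI n)) (ev R (gI n)).
Proof.
rewrite /Delta /= inordK // /scpow /= HH1E !scmul_unitr ?HgE //; exact: HH_unitr.
Qed.

Lemma Delta_x (R : comPzRingType) n (q : R) :
  Delta q (xI n) = fadd (tens (ev R (o0 n)) (ev R (xI n))) (tens (ev R (xI n)) (ev R (gI n))).
Proof.
rewrite /Delta /= inordK // /scpow /= HH1E scmul_unitl ?scmul_unitr ?H1E ?HgE ?HxE //.
  exact: HH_unitr.
exact: HH_unitl.
Qed.

Lemma sum_lam_tens (R : comPzRingType) N (f : bidx N -> R) a (w : {ffun bidx N -> R}) l :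
  \sum_j f j * tens (ev R a) w (j, l) = f a * w l.
Proof.
rewrite (eq_bigr (fun j => (f j * w l) * ev R a j)); first by rewrite sum_evr.
by move=> j _; rewrite ffunE /=; ring.
Qed.

Lemma phi_o (R : comPzRingType) n (q u a : R) phi i : comod_family q u a phi ->
  phi i (o0 n) = fscale (lam phi i (o0 n)) (bv R n.+2 0 0).
Proof.
move=> HC; rewrite (phi_form HC) Delta_o; apply/ffunP => l.
by rewrite [LHS]ffunE sum_lam_tens [RHS]ffunE -H1E.
Qed.

Lemma phi_g (R : comPzRingType) n (q u a : R) phi i : comod_family q u a phi ->
  phi i (gI n) = fscale (lam phi i (gI n)) (bv R n.+2 1 0).
Proof.
move=> HC; rewrite (phi_form HC) Delta_g; apply/ffunP => l.
by rewrite [LHS]ffunE sum_lam_tens [RHS]ffunE -HgE.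
Qed.

Lemma phi_x (R : comPzRingType) n (q u a : R) phi i : comod_family q u a phi ->
  phi i (xI n) = fadd (fscale (lam phi i (o0 n)) (bv R n.+2 0 1))
                      (fscale (lam phi i (xI n)) (bv R n.+2 1 0)).
Proof.
move=> HC; rewrite (phi_form HC) Delta_x; apply/ffunP => l.
rewrite [LHS]ffunE [RHS]ffunE ![fscale _ _ _]ffunE.
rewrite (eq_bigr (fun j => lam phi i j * tens (ev R (o0 n)) (ev R (xI n)) (j, l) +
                           lam phi i j * tens (ev R (xI n)) (ev R (gI n)) (j, l))).
  by rewrite big_split /= !sum_lam_tens -HxE -HgE.
by move=> j _; rewrite [fadd _ _ _]ffunE mulrDr.
Qed.


Lemma mulg_bv (R : comPzRingType) n (q u a : R) m k : (m < n.+2)%N -> (k < n.+2)%N ->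
  scmul (comod_c q u a) (bv R n.+2 1 0) (bv R n.+2 m k) =
  if (m.+1 < n.+2)%N then bv R n.+2 m.+1 k else fscale u (bv R n.+2 0 k).
Proof.
move=> Hm Hk; rewrite (@bvE R n 1 0) // (@bvE R n m k) // scmul_ev /comod_c /= !inordK //.
rewrite mul0n expr0 mul1r add0n (divn_small Hk) expr0 mulr1 (modn_small Hk) add1n.
case: ifP => H; first by rewrite divn_small // expr0 fscale1 modn_small.
have -> : m.+1 = n.+2 by apply/eqP; rewrite eqn_leq Hm leqNgt H.
by rewrite divnn modnn /= expr1.
Qed.

Lemma mulx_bv (R : comPzRingType) n (q u a : R) m k : (m < n.+2)%N -> (k < n.+2)%N ->
  scmul (comod_c q u a) (bv R n.+2 0 1) (bv R n.+2 m k) =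
  if (k.+1 < n.+2)%N then fscale (q ^+ m) (bv R n.+2 m k.+1)
  else fscale (q ^+ m * a) (bv R n.+2 m 0).
Proof.
move=> Hm Hk; rewrite (@bvE R n 0 1) // (@bvE R n m k) // scmul_ev /comod_c /= !inordK //.
rewrite mul1n add0n (divn_small Hm) expr0 mulr1 (modn_small Hm) add1n.
case: ifP => H; first by rewrite divn_small // expr0 mulr1 modn_small.
have -> : k.+1 = n.+2 by apply/eqP; rewrite eqn_leq Hk leqNgt H.
by rewrite divnn modnn /= expr1.
Qed.

Lemma mul1_B (R : comPzRingType) n (q u a : R) V :
  scmul (comod_c q u a) (bv R n.+2 0 0) V = V.
Proof.
rewrite (@bvE R n 0 0) //; apply: scmul_unitl => j.
rewrite /comod_c /= inordK // mul0n expr0 !add0n !divn_small ?ltn_ord // !expr0 !mulr1.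
by rewrite fscale1 !modn_small ?ltn_ord // bv_ev.
Qed.

Definition Gp (R : comPzRingType) (n : nat) (q u a nu : R) j (V : {ffun bidx n.+2 -> R}) :=
  iter j (scmul (comod_c q u a) (fscale nu (bv R n.+2 1 0))) V.

Lemma GpZ (R : comPzRingType) (n : nat) (q u a nu : R) j r (V : {ffun bidx n.+2 -> R}) :
  Gp q u a nu j (fscale r V) = fscale r (Gp q u a nu j V).
Proof. by elim: j => [|j IH] //=; rewrite /Gp /= -/(Gp _ _ _ _ _ _) IH scmulZr. Qed.

Lemma GpD (R : comPzRingType) (n : nat) (q u a nu : R) j (V W : {ffun bidx n.+2 -> R}) :
  Gp q u a nu j (fadd V W) = fadd (Gp q u a nu j V) (Gp q u a nu j W).
Proof. by elim: j => [|j IH] //=; rewrite /Gp /= -!/(Gp _ _ _ _ _ _) IH scmulDr. Qed.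

Lemma Gp_bv (R : comPzRingType) n (q u a nu : R) i j m : (i + j < n.+2)%N -> (m < n.+2)%N ->
  Gp q u a nu j (bv R n.+2 i m) = fscale (nu ^+ j) (bv R n.+2 (i + j) m).
Proof.
move=> Hij Hm; elim: j Hij => [|j IH] Hij.
  by rewrite /Gp /= addn0 expr0 fscale1.
rewrite /Gp /= -/(Gp _ _ _ _ _ _) IH; last by lia.
rewrite scmulZr scmulZl mulg_bv; last by [].
  rewrite ifT; last by lia.
  by rewrite fscaleA addnS exprS mulrC.
lia.
Qed.

Lemma Gp_last (R : comPzRingType) n (q u a nu : R) m : (m < n.+2)%N ->
  Gp q u a nu n.+1 (bv R n.+2 1 m) = fscale (nu ^+ n.+1 * u) (bv R n.+2 0 m).
Proof.
move=> Hm; rewrite /Gp iterS -/(Gp _ _ _ _ _ _) Gp_bv // scmulZr scmulZl mulg_bv //.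
by rewrite add1n ltnn !fscaleA exprS; congr fscale; ring.
Qed.


Definition Xf (R : comPzRingType) (n : nat) (c mu : R) : {ffun bidx n.+2 -> R} :=
  fadd (fscale c (bv R n.+2 0 1)) (fscale mu (bv R n.+2 1 0)).
Definition Gf (R : comPzRingType) (n : nat) (nu : R) : {ffun bidx n.+2 -> R} :=
  fscale nu (bv R n.+2 1 0).
Definition Wop (R : comPzRingType) (n : nat) (q u a c mu nu : R) (V : {ffun bidx n.+2 -> R}) :=
  fadd (Gp q u a nu n.+1 (scmul (comod_c q u a) (Xf n c mu) (scmul (comod_c q u a) (Gf n nu) V)))
       (fscale (-1) (Gp q u a nu n.+1 (scmul (comod_c q u a) (Gf n nu) (scmul (comod_c q u a) (Xf n c mu) V)))).

Lemma W_bv (R : comPzRingType) n (q u a c mu nu : R) k : (k < n.+2)%N ->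
  Wop q u a c mu nu (bv R n.+2 0 k) =
  fscale (c * nu ^+ n.+2 * (q - 1) * u)
    (if (k.+1 < n.+2)%N then bv R n.+2 0 k.+1 else fscale a (bv R n.+2 0 0)).
Proof.
move=> Hk; rewrite /Wop /Xf /Gf.
rewrite ?(scmulZr, scmulZl, scmulDl, scmulDr).
rewrite (@mulg_bv R n q u a 0 k) // (@mulx_bv R n q u a 0 k) // (@mulx_bv R n q u a 1 k) //.
set Y := scmul (comod_c q u a) (bv R n.+2 1 0) (bv R n.+2 1 k).
case: ifP => Hk1.
  rewrite ?(scmulZr, scmulZl, scmulDl, scmulDr) (@mulg_bv R n q u a 0 k.+1) //.
  rewrite ?(GpD, GpZ) !Gp_last //.
  move: (Gp q u a nu n.+1 Y) => Z; apply/ffunP => l; rewrite !ffunE (exprS nu n.+1); move: (nu ^+ n.+1) => t; ring.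
rewrite ?(scmulZr, scmulZl, scmulDl, scmulDr) (@mulg_bv R n q u a 0 0) //.
rewrite ?(GpD, GpZ) !Gp_last //.
move: (Gp q u a nu n.+1 Y) => Z; apply/ffunP => l; rewrite !ffunE (exprS nu n.+1); move: (nu ^+ n.+1) => t; ring.
Qed.


Lemma big_sub_uniq (R : comPzRingType) (T : eqType) (s1 s2 : seq T) (F : T -> R) :
  uniq s1 -> uniq s2 -> {subset s1 <= s2} ->
  (forall x, x \in s2 -> x \notin s1 -> F x = 0) ->
  \sum_(x <- s1) F x = \sum_(x <- s2) F x.
Proof.
move=> u1 u2 sub H0.
rewrite [RHS](bigID (fun x => x \in s1)) /=.
rewrite [X in _ + X]big1_seq ?addr0; last by move=> x /andP[nx xs]; rewrite H0.
rewrite -[RHS]big_filter; apply: perm_big; apply: uniq_perm => //.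
  exact: filter_uniq.
by move=> x; rewrite mem_filter; case: (boolP (x \in s1)) => // /sub ->.
Qed.

Definition coef (R : comPzRingType) N (l : seq (word N * R)) (w : word N) : R :=
  \sum_(p <- l) (p.1 == w)%:R * p.2.

Definition mkT (R : comPzRingType) N (l : seq (word N * R)) : Talg R N :=
  [fsfun w in seq_fset tt (map fst l) => coef l w | 0].

Lemma evalT_mkT (R : comPzRingType) N (q u a : R) phi (l : seq (word N * R)) :
  evalT q u a phi (mkT l) = [ffun k => \sum_(p <- l) p.2 * evalW q u a phi p.1 k].
Proof.
apply/ffunP => k; rewrite !ffunE.
set S := seq_fset tt (map fst l).
rewrite (@big_sub_uniq R _ (finsupp (mkT l)) S).
- rewrite (eq_big_seq (fun w => coef l w * evalW q u a phi w k)); last first.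
    by move=> w wS; rewrite /mkT fsfunE wS.
  rewrite /coef (eq_bigr (fun w => \sum_(p <- l) (p.1 == w)%:R * p.2 * evalW q u a phi w k)); last first.
    by move=> w _; rewrite mulr_suml.
  rewrite exchange_big /=; apply: eq_big_seq => p pl.
  have pS : p.1 \in S by rewrite seq_fsetE; apply: map_f.
  have uS : uniq S by exact: seq_fset_uniq.
  rewrite (bigD1_seq _ pS uS).
  have -> : (p.1 == p.1) = true by apply/eqP.
  rewrite big1; first by rewrite /= addr0 mulr1n mul1r mulrC.
  move=> w nw; have -> : (p.1 == w) = false by apply/eqP => E; move: nw; rewrite E eqxx. 
  by rewrite !mul0r.
- exact: fset_uniq.
- exact: seq_fset_uniq.
- move=> w; rewrite mem_finsupp /mkT fsfunE.
  by case: (w \in S) => //; rewrite eqxx.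
- move=> w _ /negPf; rewrite mem_finsupp => /negbFE/eqP ->; exact: mul0r.
Qed.

Lemma lin_sum (R : comPzRingType) N (f : {ffun bidx N -> R} -> {ffun bidx N -> R})
  (T : Type) (l : seq T) (g : T -> R) (F : T -> {ffun bidx N -> R}) :
  (forall x y, f (fadd x y) = fadd (f x) (f y)) ->
  (forall r x, f (fscale r x) = fscale r (f x)) ->
  f [ffun k => \sum_(p <- l) g p * F p k] = [ffun k => \sum_(p <- l) g p * f (F p) k].
Proof.
move=> fD fZ; elim: l => [|p l IH].
  have E : [ffun k => \sum_(p <- [::]) g p * F p k] = fscale 0 [ffun k => \sum_(p <- [::]) g p * F p k].
    by apply/ffunP => k; rewrite !ffunE big_nil mul0r.
  rewrite E fZ; apply/ffunP => k; rewrite !ffunE big_nil mul0r //.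
have -> : [ffun k => \sum_(p0 <- p :: l) g p0 * F p0 k] =
   fadd (fscale (g p) (F p)) [ffun k => \sum_(p0 <- l) g p0 * F p0 k].
  by apply/ffunP => k; rewrite !ffunE big_cons.
rewrite fD fZ IH; apply/ffunP => k; rewrite !ffunE big_cons //.
Qed.


Definition zE n : nat * bidx n.+2 := (0%N, o0 n).
Definition zG n : nat * bidx n.+2 := (0%N, gI n).
Definition zX n : nat * bidx n.+2 := (0%N, xI n).
Definition Gs n : word n.+2 := nseq n.+1 (zG n).

Fixpoint wl (R : comPzRingType) n k : seq (word n.+2 * R) :=
  match k with
  | 0%N => [:: ([::], 1)]
  | k.+1 => [seq (Gs n ++ zX n :: zG n :: p.1, p.2) | p <- wl R n k] ++
            [seq (Gs n ++ zG n :: zX n :: p.1, - p.2) | p <- wl R n k]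
  end.

Definition word2 n : word n.+2 := flatten (nseq n.+2 (nseq n.+2 (zG n) ++ [:: zE n])).

Definition Ptest (R : comPzRingType) n (q a0 : R) : Talg R n.+2 :=
  mkT (wl R n n.+2 ++ [:: (word2 n, - ((q - 1) ^+ n.+2 * a0))]).

Lemma evalW_cat (R : comPzRingType) N (q u a : R) phi (s w : word N) :
  evalW q u a phi (s ++ w) =
  foldr (fun z acc => scmul (comod_c q u a) (phi z.1 z.2) acc) (evalW q u a phi w) s.
Proof. by rewrite /evalW foldr_cat. Qed.

Lemma foldr_nseq (A B : Type) (f : A -> B -> B) x j z :
  foldr f x (nseq j z) = iter j (f z) x.
Proof. by elim: j => //= j ->. Qed.

Lemma WopD (R : comPzRingType) n (q u a c mu nu : R) (x y : {ffun bidx n.+2 -> R}) :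
  Wop q u a c mu nu (fadd x y) = fadd (Wop q u a c mu nu x) (Wop q u a c mu nu y).
Proof.
rewrite /Wop !scmulDr !GpD; apply/ffunP => l; rewrite !ffunE; ring.
Qed.

Lemma WopZ (R : comPzRingType) n (q u a c mu nu : R) r (x : {ffun bidx n.+2 -> R}) :
  Wop q u a c mu nu (fscale r x) = fscale r (Wop q u a c mu nu x).
Proof.
rewrite /Wop !scmulZr !GpZ; apply/ffunP => l; rewrite !ffunE; ring.
Qed.


Lemma eval_wl (R : comPzRingType) n (q u a c mu nu : R) phi :
  phi 0%N (o0 n) = fscale c (bv R n.+2 0 0) ->
  phi 0%N (gI n) = Gf n nu -> phi 0%N (xI n) = Xf n c mu ->
  forall k, [ffun l => \sum_(p <- wl R n k) p.2 * evalW q u a phi p.1 l] =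
            iter k (Wop q u a c mu nu) (bv R n.+2 0 0).
Proof.
move=> HE HG HX; elim => [|k IH].
  apply/ffunP => l; rewrite [LHS]ffunE big_cons big_nil /=. by rewrite mul1r addr0.
rewrite iterS -IH lin_sum; [|exact: WopD|exact: WopZ].
apply/ffunP => l; rewrite !ffunE big_cat !big_map /= -big_split /=.
apply: eq_bigr => p _.
rewrite !evalW_cat !foldr_nseq /= HG HX.
rewrite /Wop !ffunE; ring.
Qed.


Lemma iterW (R : comPzRingType) n (q u a c mu nu : R) k : (k < n.+2)%N ->
  iter k (Wop q u a c mu nu) (bv R n.+2 0 0) =
  fscale ((c * nu ^+ n.+2 * (q - 1) * u) ^+ k) (bv R n.+2 0 k).
Proof.
elim: k => [|k IH] Hk; first by rewrite expr0 fscale1.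
rewrite iterS IH; last by lia.
rewrite WopZ W_bv; last by lia.
by rewrite Hk fscaleA -exprSr.
Qed.

Lemma iterW_full (R : comPzRingType) n (q u a c mu nu : R) :
  iter n.+2 (Wop q u a c mu nu) (bv R n.+2 0 0) =
  fscale ((c * nu ^+ n.+2 * (q - 1) * u) ^+ n.+2 * a) (bv R n.+2 0 0).
Proof.
rewrite iterS iterW // WopZ W_bv // ltnn !fscaleA.
by move: (c * nu ^+ n.+2 * (q - 1) * u) => K; rewrite -exprSr.
Qed.

Lemma evalW_word2 (R : comPzRingType) n (q u a c nu : R) phi :
  phi 0%N (o0 n) = fscale c (bv R n.+2 0 0) ->
  phi 0%N (gI n) = Gf n nu ->
  evalW q u a phi (word2 n) = fscale ((c * nu ^+ n.+2 * u) ^+ n.+2) (bv R n.+2 0 0).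
Proof.
move=> HE HG.
have step : forall V, foldr (fun z acc => scmul (comod_c q u a) (phi z.1 z.2) acc) V
                        (nseq n.+2 (zG n) ++ [:: zE n]) = Gp q u a nu n.+2 (scmul (comod_c q u a) (phi 0%N (o0 n)) V).
  by move=> V; rewrite foldr_cat foldr_nseq /= HG.
rewrite /word2.
have gen : forall j, evalW q u a phi (flatten (nseq j (nseq n.+2 (zG n) ++ [:: zE n]))) =
   fscale ((c * nu ^+ n.+2 * u) ^+ j) (bv R n.+2 0 0).
  elim => [|j IH]; first by rewrite expr0 fscale1.
  have -> : flatten (nseq j.+1 (nseq n.+2 (zG n) ++ [:: zE n])) =
     (nseq n.+2 (zG n) ++ [:: zE n]) ++ flatten (nseq j (nseq n.+2 (zG n) ++ [:: zE n])) by [].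
  rewrite evalW_cat step IH HE scmulZr scmulZl mul1_B /Gp iterS -/(Gp _ _ _ _ _ _).
  rewrite GpZ GpZ (@Gp_bv R n q u a nu 0 n.+1 0) // add0n !scmulZr scmulZl mulg_bv // ltnn !fscaleA.
  congr (fscale _ _); rewrite [in RHS]exprS; move: ((c * nu ^+ n.+2 * u) ^+ j) => K.
  rewrite (exprS nu n.+1); move: (nu ^+ n.+1) => t; ring.
exact: gen.
Qed.

Lemma eval_Ptest (R : comPzRingType) n (q u a1 a0 c mu nu : R) phi :
  phi 0%N (o0 n) = fscale c (bv R n.+2 0 0) ->
  phi 0%N (gI n) = Gf n nu -> phi 0%N (xI n) = Xf n c mu ->
  evalT q u a1 phi (Ptest n q a0) =
  fscale ((c * nu ^+ n.+2 * u) ^+ n.+2 * (q - 1) ^+ n.+2 * (a1 - a0)) (bv R n.+2 0 0).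
Proof.
move=> HE HG HX; rewrite /Ptest evalT_mkT; apply/ffunP => l.
rewrite [LHS]ffunE big_cat big_cons big_nil; cbn [fst snd].
move: (congr1 (fun f : {ffun bidx n.+2 -> R} => f l) (eval_wl q u a1 HE HG HX n.+2)).
rewrite [X in X = _ -> _]ffunE => ->.
rewrite iterW_full (evalW_word2 _ _ _ HE HG).
rewrite (_ : c * nu ^+ n.+2 * (q - 1) * u = (c * nu ^+ n.+2 * u) * (q - 1)); last first.
  by move: (nu ^+ n.+2) => t; ring.
rewrite exprMn !ffunE.
move: ((c * nu ^+ n.+2 * u) ^+ n.+2) ((q - 1) ^+ n.+2) => A B; rewrite /=; ring.
Qed.


Lemma comod_phi0 (R : comPzRingType) n (q u a : R) :
  comod_family q u a (fun _ (h : bidx n.+2) => ev R h).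
Proof.
move=> i h; apply/ffunP => kl; rewrite /rhoB [LHS]ffunE [RHS]ffunE.
rewrite sum_evl rho_Delta.
rewrite (eq_bigr (fun p => Delta q h p * ev R kl p)); first by rewrite sum_evr.
move=> p _; rewrite tens_ev -surjective_pairing [ev R p kl]ffunE [ev R kl p]ffunE.
by rewrite (eq_sym kl).
Qed.

Unset Implicit Arguments.

Theorem proposition3p2 (R : comPzRingType) (N : nat) (q : R)
  (HN : (2 <= N)%N) (Hq : cyclo_root N q)
  (u u' a a' : R) (Hu : is_unit u) (Hu' : is_unit u')
  (H1q : is_unit (1 - q))
  (HId : forall P : Talg R N,
           is_Hidentity q u a P <-> is_Hidentity q u' a' P) :
  a' = a.
Proof.
case: N HN Hq HId => [|[|n]] HN Hq HId; [exfalso; lia | exfalso; lia |].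
have H1 : is_Hidentity q u a (Ptest n q a).
  move=> phi HC.
  rewrite (eval_Ptest q u a a (phi_o 0%N HC) (phi_g 0%N HC) (phi_x 0%N HC)).
  by apply/ffunP => l; rewrite !ffunE subrr mulr0 mul0r.
have H2 := (HId _).1 H1 _ (@comod_phi0 R n q u' a').
have E1 : ev R (o0 n) = fscale 1 (bv R n.+2 0 0) by rewrite fscale1; exact: (esym (H1E R n)).
have E2 : ev R (gI n) = Gf n 1 by rewrite /Gf fscale1; exact: (esym (HgE R n)).
have E3 : ev R (xI n) = Xf n 1 0.
  by apply/ffunP => l; rewrite -HxE !ffunE; ring.
move: H2; rewrite (eval_Ptest q u' a' a E1 E2 E3) => /(congr1 (fun f : {ffun bidx n.+2 -> R} => f (o0 n))).
rewrite !ffunE /= expr1n !mul1r mulr1 -exprMn => H.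
case: Hu' => v Hv; case: H1q => w Hw.
have K0 : u' * (q - 1) * (v * - w) = 1.
  have -> : u' * (q - 1) * (v * - w) = (u' * v) * ((1 - q) * w) by ring.
  by rewrite Hv Hw mulr1.
have K1 : (u' * (q - 1)) ^+ n.+2 * (v * - w) ^+ n.+2 = 1 by rewrite -exprMn K0 expr1n.
apply/eqP; rewrite -subr_eq0; apply/eqP.
by rewrite -[a' - a]mul1r -K1 mulrAC H mul0r.
Qed.
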